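(* Let $G$ be a finite group, $H\subseteq G$ of index $2$, $\sigma\in G\setminus H$, $\chi:H\to\mathbb{C}^\times$ a character with $\rho=\mathrm{Ind}_H^G(\chi)$ faithful, and suppose $\epsilon_\chi=\chi^\sigma/\chi$ has order exactly $2$. Let $K=\ker(\epsilon_\chi)$ and $\chi_K=\chi|_K$. Then for every subgroup $H'\subset G$ of index $2$ and character $\chi':H'\to\mathbb{C}^\times$ with $\rho\cong \mathrm{Ind}_{H'}^G(\chi')$ one has $K\subseteq H'$ and $\chi'|_K=\chi_K$; moreover $g^2\in K$ for all $g\in G$ and $$\mathrm{tr}(\rho(g))=\begin{cases}2\chi_K(g)& g\in K,\\ 0 & g\notin K,\end{cases}\qquad \det(\rho(g))=\begin{cases}\chi_K(g^2)& g\in K,\\ -\chi_K(g^2)& g\notin K.\end{cases}$$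
   Context: $\chi^\sigma(h)=\chi(\sigma^{-1}h\sigma)$ for $h\in H$; for $H$ of index $2$ this is independent of $\sigma\in G\setminus H$. *)

(* Defs.v *)
From HB Require Import structures.
From mathcomp Require Import all_boot all_order all_algebra all_fingroup all_solvable all_field all_character.
Set Implicit Arguments. Unset Strict Implicit. Unset Printing Implicit Defensive.

(* Main.v *)
Require Import Defs.
From HB Require Import structures.
From mathcomp Require Import all_boot all_order all_algebra all_fingroup all_solvable all_field all_character.
From mathcomp Require Import ring.
Set Implicit Arguments. Unset Strict Implicit. Unset Printing Implicit Defensive.
Import Order.TTheory GRing.Theory Num.Theory.
Local Open Scope ring_scope.

Section Aux.
Variable gT : finGroupType.

Lemma idx2_mul (G H : {group gT}) y z :
  H \subset G -> (#|G : H|)%g = 2%N -> y \in G :\: H -> z \in G :\: H -> (z * y)%g \in H.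
Proof.
move=> sHG iHG yGH zGH.
have yV : (y^-1)%g \in G :\: H.
  by move: yGH; rewrite !inE groupV groupV.
by move: zGH; rewrite -(rcoset_index2 sHG iHG yV) mem_rcoset invgK.
Qed.

Lemma idx2_sq (G H : {group gT}) y :
  H \subset G -> (#|G : H|)%g = 2%N -> y \in G -> (y ^+ 2)%g \in H.
Proof.
move=> sHG iHG Gy; case Hy: (y \in H); first by rewrite groupX.
by rewrite expgS expg1 (idx2_mul sHG iHG) // inE Hy Gy.
Qed.

Lemma resInd2 (G H : {group gT}) tau (phi : 'CF(H)) :
  H \subset G -> (#|G : H|)%g = 2%N -> tau \in G :\: H ->
  'Res[H] ('Ind[G] phi) = phi + (phi ^ tau)%CF.
Proof.
move=> sHG iHG tGH.
have nHG := index2_normal sHG iHG.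
have Gt : tau \in G by case/setDP: tGH.
have Nt : tau \in 'N(H)%g by rewrite (subsetP (normal_norm nHG)).
apply/cfun_inP => x Hx.
rewrite cfResE // cfIndE // !cfunE cfConjgE //.
rewrite (bigID (mem H)) /=.
have -> : \sum_(i in G | i \in H) phi (x ^ i)%g = \sum_(i in G | i \in H) phi x.
  by apply: eq_bigr => i /andP[_ Hi]; rewrite cfunJ.
have -> : \sum_(i in G | i \notin H) phi (x ^ i)%g
     = \sum_(i in G | i \notin H) phi (x ^ tau^-1)%g.
  apply: eq_bigr => i /andP[Gi nHi].
  have tiH : (tau * i)%g \in H.
    apply: (idx2_mul sHG iHG) => //; by rewrite inE nHi Gi.
  by rewrite -(cfunJ phi (x ^ tau^-1)%g tiH) -conjgM mulgA mulVg mul1g.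
have -> : \sum_(i in G | i \in H) phi x = \sum_(i in H) phi x.
  by apply: eq_bigl => i; apply: andb_idl => /(subsetP sHG).
have e2 : forall i, (i \in G) && (i \notin H) = (i \in (H :* tau)%g).
  move=> i; rewrite (rcoset_index2 sHG iHG tGH). by rewrite in_setD andbC.
rewrite (eq_bigl _ _ e2) !sumr_const card_rcoset.
rewrite -mulrnDl -[(_ + _) *+ _]mulr_natl mulKf //.
by rewrite pnatr_eq0 -lt0n cardG_gt0.
Qed.
Lemma det2tr (A : 'M[algC]_2) : \det A *+ 2 = (\tr A) ^+ 2 - \tr (A *m A).
Proof.
rewrite (expand_det_row _ 0) /mxtrace !big_ord_recl !big_ord0 /cofactor !det_mx11 !mxE.
rewrite /= !big_ord_recl !big_ord0 /=.
have L1 : lift (0:'I_2) (0:'I_1) = 1 by apply: val_inj.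
have L2 : lift (ord0:'I_2) (ord0:'I_1) = 1 by apply: val_inj.
have L3 : lift (1:'I_2) (0:'I_1) = 0 by apply: val_inj.
have L4 : (ord0 : 'I_2) = 0 by apply: val_inj.
rewrite ?L1 ?L2 ?L3 ?L4 ?L1 ?L3.
rewrite /bump /= expr0 expr1 mulr2n; ring.
Qed.
End Aux.

Theorem mainTheorem2 (gT : finGroupType) (G H : {group gT}) (sigma : gT)
  (chi : 'CF(H)) (n : nat) (rho : mx_representation algC G n) :
  H \subset G -> (#|G : H|)%g = 2%N ->
  sigma \in G :\: H ->
  chi \is a linear_char ->
  cfRepr rho = 'Ind[G] chi ->
  mx_faithful rho ->
  let eps := ((chi ^ sigma)%CF / chi)%R in
  #[eps]%CF = 2%N ->
  let K := cfker eps in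
  let chiK := 'Res[K] chi in
  [/\ (forall (H' : {group gT}) (chi' : 'CF(H')),
         H' \subset G -> (#|G : H'|)%g = 2%N -> chi' \is a linear_char ->
         cfRepr rho = 'Ind[G] chi' ->
         K \subset H' /\ 'Res[K] chi' = chiK),
      {in G, forall g, (g ^+ 2)%g \in K},
      {in G, forall g, \tr (rho g) = if g \in K then 2%:R * chiK g else 0}
    & {in G, forall g, \det (rho g) =
          if g \in K then chiK ((g ^+ 2)%g) else - chiK ((g ^+ 2)%g)}].
Proof.
move=> sHG iHG sGH lin_chi Hrho faith eps ord2 K chiK.
have nHG := index2_normal sHG iHG.
have [Gs nHs] : sigma \in G /\ sigma \notin H by case/setDP: sGH.
have Ns : sigma \in 'N(H)%g by rewrite (subsetP (normal_norm nHG)).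
have lin_s : (chi ^ sigma)%CF \is a linear_char by exact: cfConjg_lin_char.
have lin_eps : eps \is a linear_char by rewrite /eps rpred_div.
have eps_chi : eps * chi = (chi ^ sigma)%CF by rewrite /eps divrK // lin_char_unitr.
have epsE : forall x, x \in H -> (chi ^ sigma)%CF x = eps x * chi x.
  by move=> x Hx; rewrite -eps_chi cfunE.
have eps2 : forall x, x \in H -> eps x ^+ 2 = 1.
  by move=> x Hx; rewrite -exp_cfunE // -ord2 exp_cforder cfun1E Hx.
have inK : forall x, x \in H -> (x \in K) = (eps x == 1).
  by move=> x Hx; rewrite /K cfkerEchar ?lin_charW // inE Hx lin_char1.
have sKH : K \subset H := cfker_sub eps.
have notK : forall x, x \in H -> x \notin K -> eps x = -1.
  move=> x Hx; rewrite inK // => /negPf e1; have := eps2 x Hx.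
  by move/eqP; rewrite sqrf_eq1 e1 /= => /eqP.
have resInd := @resInd2 _ G H sigma chi sHG iHG sGH.
have IndH : forall x, x \in H -> 'Ind[G] chi x = chi x + eps x * chi x.
  by move=> x Hx; rewrite -(cfResE ('Ind[G] chi) sHG Hx) resInd cfunE epsE.
have IndOut : forall x, x \notin H -> 'Ind[G] chi x = 0.
  by move=> x; apply: cfun_on0 (cfInd_normal chi nHG).
have lin_K : chiK \is a linear_char by exact: cfRes_lin_char.
have IndK : forall x, x \in K -> 'Ind[G] chi x = 2%:R * chiK x.
  move=> x Kx; have Hx := subsetP sKH x Kx.
  move: (Kx); rewrite inK // => /eqP e1.
  by rewrite IndH // e1 mul1r /chiK cfResE // mulr_natl mulr2n.
have IndnK : forall x, x \in G -> x \notin K -> 'Ind[G] chi x = 0.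
  move=> x Gx nKx; case Hx: (x \in H).
    by rewrite IndH // notK // mulN1r subrr.
  by rewrite IndOut ?Hx.
have trE : forall g, g \in G -> \tr (rho g) = 'Ind[G] chi g.
  by move=> g Gg; rewrite -Hrho cfunE Gg mulr1n.
have sq : forall g, g \in G -> (g ^+ 2)%g \in K.
  move=> g Gg; have H2 := idx2_sq sHG iHG Gg; rewrite inK //.
  case Hg: (g \in H).
    by rewrite lin_charX // eps2.
  have sgH : (sigma * g)%g \in H.
    by apply: (idx2_mul sHG iHG _ sGH); rewrite inE Hg Gg.
  have : (chi ^ sigma)%CF (g ^+ 2)%g = chi (g ^+ 2)%g.
    rewrite cfConjgE //.
    have -> : (sigma^-1 = g * (sigma * g)^-1)%g by rewrite invMg mulgA mulgV mul1g.
    have gg1 : (g ^ g = g)%g by rewrite conjgE mulKg.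
    by rewrite conjgM conjXg gg1 cfunJ ?groupV.
  rewrite epsE // => e; apply/eqP; apply: (mulIf (lin_char_neq0 lin_chi H2)).
  by rewrite mul1r.
have P3 : {in G, forall g, \tr (rho g) = if g \in K then 2%:R * chiK g else 0}.
  move=> g Gg; rewrite trE //; case: ifP => Kg; first exact: IndK.
  by rewrite IndnK // Kg.
split => //.
- move=> H' chi' sH'G iH'G lin' Hrho'.
  have IE : 'Ind[G] chi' = 'Ind[G] chi by rewrite -Hrho -Hrho'.
  have nH'G := index2_normal sH'G iH'G.
  have [tau tG tnH'] : exists2 tau, tau \in G & tau \notin H'.
    apply/subsetPn; apply/negP => sGH'.
    have eqH : (H' :=: G)%g by apply/eqP; rewrite eqEsubset sH'G sGH'.
    by move: iH'G; rewrite eqH indexgg.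
  have tGH' : tau \in G :\: H' by rewrite inE tnH' tG.
  have sKH' : K \subset H'.
    apply/subsetP => k Kk; apply: contraT => nH'k.
    have := IndK k Kk; rewrite -IE (cfun_on0 (cfInd_normal chi' nH'G) nH'k).
    move/esym/eqP; rewrite mulf_eq0 pnatr_eq0 (negbTE (lin_char_neq0 lin_K Kk)).
    by [].
  split => //.
  have lin_a : 'Res[K] chi' \is a linear_char by exact: cfRes_lin_char.
  have lin_b : 'Res[K] (chi' ^ tau)%CF \is a linear_char.
    by apply: cfRes_lin_char; exact: cfConjg_lin_char.
  have sum : 'Res[K] chi' + 'Res[K] (chi' ^ tau)%CF = chiK + chiK.
    apply/cfun_inP => k Kk; have H'k := subsetP sKH' k Kk.
    have R := @resInd2 _ G H' tau chi' sH'G iH'G tGH'.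
    move/(congr1 (fun f : 'CF(H') => f k)): R.
    rewrite cfResE // cfunE IE IndK // => R.
    by rewrite cfunE [RHS]cfunE -mulr2n -mulr_natl R !cfResE.
  have /irrP[i Ei] := lin_char_irr lin_a.
  have /irrP[j Ej] := lin_char_irr lin_b.
  have /irrP[l El] := lin_char_irr lin_K.
  have := congr1 (fun f => '[f, chiK]) sum.
  rewrite /= !cfdotDl Ei Ej El !cfdot_irr eqxx.
  case: (i =P l) => [-> _ // | _]; case: (j == l); rewrite ?add0r => /eqP.
    by rewrite eq_sym -subr_eq0 addrK oner_eq0.
  by rewrite eq_sym -mulr2n pnatr_eq0.
- have n2 : n = 2%N.
    have := cfRepr1 rho; rewrite Hrho cfInd1 // iHG lin_char1 // mulr1.
    by move/eqP; rewrite eqr_nat => /eqP.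
  subst n.
  move=> g Gg; have K2 := sq g Gg.
  have D := det2tr (rho g).
  have gg : (g * g = g ^+ 2)%g by rewrite expgS expg1.
  rewrite -repr_mxM // gg !trE ?groupX // (IndK _ K2) in D.
  apply: (mulIf (x := 2%:R)); first by rewrite pnatr_eq0.
  rewrite mulr_natr D; case: ifP => Kg.
    rewrite IndK // lin_charX //; ring.
  rewrite IndnK ?Kg //; ring.
Qed.
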